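(* Let $\theta^*=(\theta_1^*,\dots,\theta_M^* )$ be an optimal solution of OPT. Then for every pair of jobs $i,j\in\{1,\dots,M\}$ there exists a constant $c_{i,j}$ such that $$\frac{s'(\theta_i^*(t))}{s'(\theta_j^*(t))}=c_{i,j}$$ for all $t>0$ with $\theta_i^*(t)>0$ and $\theta_j^*(t)>0$.
   Context: Setting (problem OPT). There are $M$ jobs, all available at time $0$, with sizes $x_1\ge x_2\ge\cdots\ge x_M>0$ and weights $0<w_1\le w_2\le\cdots\le w_M$. A total resource $B>0$ is shared. The speedup function $s:[0,B]\to[0,\infty)$ satisfies: $s(0)=0$; $s$ is strictly increasing, strictly concave, differentiable, and $s'$ is continuous on $[0,B]$ (so $s'>0$ and $s'$ is strictly decreasing). A schedule consists of functions $\theta_i:(0,\infty)\to[0,B]$, $i=1,\dots,M$, each right-continuous in $t$, with $\sum_{i=1}^M\theta_i(t)\le B$ for all $t>0$. The service received by job $i$ on $[t_1,t_2]$ is $Q_i(t_1,t_2)=\int_{t_1}^{t_2}s(\theta_i(t))\,dt$. The completion time $T_i$ of job $i$ satisfies $Q_i(0,T_i)=x_i$, and $\theta_i(t)=0$ for $t>T_i$. OPT is the problem of choosing a schedule minimizing $J=\sum_{i=1}^M w_iT_i$. An optimal solution is a feasible schedule attaining the minimum; $T_i^*$ denotes its completion times. *)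

(* Defs.v *)
From Stdlib Require Import Reals Lra.
From Coquelicot Require Import Coquelicot.
Open Scope R_scope.

(* rsum n f = f 0 + ... + f (n-1)  (jobs are indexed 0 .. M-1) *)
Fixpoint rsum (n : nat) (f : nat -> R) : R :=
  match n with O => 0 | S k => rsum k f + f k end.

(* Hypotheses on the speedup function s on [0,B], with ds playing s'. *)
Definition speedup_ok (B : R) (s ds : R -> R) : Prop :=
  s 0 = 0 /\
  (forall a b, 0 <= a -> a < b -> b <= B -> s a < s b) /\
  (forall a b l, 0 <= a <= B -> 0 <= b <= B -> a <> b -> 0 < l < 1 ->
      l * s a + (1 - l) * s b < s (l * a + (1 - l) * b)) /\
  (forall a, 0 <= a <= B ->
      filterlim (fun y => (s y - s a) / (y - a))
        (within (fun y => 0 <= y <= B /\ y <> a) (locally a)) (locally (ds a))) /\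
  (forall a, 0 <= a <= B ->
      filterlim ds (within (fun y => 0 <= y <= B) (locally a)) (locally (ds a))) /\
  (forall a, 0 <= a <= B -> 0 < ds a).

Definition feasible (M : nat) (B : R) (s : R -> R) (x : nat -> R)
    (th : nat -> R -> R) (T : nat -> R) : Prop :=
  (forall i t, (i < M)%nat -> 0 < t -> 0 <= th i t <= B) /\
  (forall i t, (i < M)%nat -> 0 < t ->
      filterlim (th i) (at_right t) (locally (th i t))) /\
  (forall t, 0 < t -> rsum M (fun i => th i t) <= B) /\
  (forall i, (i < M)%nat ->
      0 <= T i /\
      is_RInt (fun t => s (th i t)) 0 (T i) (x i) /\
      (forall t, T i < t -> th i t = 0)).

Definition cost (M : nat) (w : nat -> R) (T : nat -> R) : R :=
  rsum M (fun i => w i * T i).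

Definition optimal (M : nat) (B : R) (s : R -> R) (x w : nat -> R)
    (th : nat -> R -> R) (T : nat -> R) : Prop :=
  feasible M B s x th T /\
  (forall th' T', feasible M B s x th' T' -> cost M w T <= cost M w T').

(* Main.v *)
Require Import Defs.
From Stdlib Require Import Reals Lra Lia Classical.
From Coquelicot Require Import Coquelicot.
From Stdlib Require Import IndefiniteDescription.
Open Scope R_scope.


Lemma ball_R (x e y : R) : ball x e y <-> Rabs (y - x) < e.
Proof. reflexivity. Qed.

Lemma at_right_ex (t : R) (P : R -> Prop) :
  at_right t P -> exists d, 0 < d /\ forall y, t < y < t + d -> P y.
Proof.
  intros [e He]. exists e. split. apply cond_pos.
  intros y Hy. apply He. apply ball_R. rewrite Rabs_right; lra. lra.
Qed.

Lemma at_right_of (t : R) (P : R -> Prop) d :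
  0 < d -> (forall y, t < y < t + d -> P y) -> at_right t P.
Proof.
  intros Hd H. exists (mkposreal d Hd). intros y Hy Hty. apply H.
  apply ball_R in Hy. simpl in Hy. apply Rabs_lt_between' in Hy. lra.
Qed.

Lemma rc_close (f : R -> R) t v :
  filterlim f (at_right t) (locally v) ->
  forall g, 0 < g -> exists d, 0 < d /\ forall y, t < y < t + d -> Rabs (f y - v) < g.
Proof.
  intros H g Hg. pose proof (proj1 (filterlim_locally _ _) H (mkposreal g Hg)) as H0. clear H. rename H0 into H.
  apply at_right_ex in H. destruct H as [d [Hd H]]. exists d; split; [exact Hd|].
  intros y Hy. apply H in Hy. apply ball_R in Hy. exact Hy.
Qed.

Lemma rc_of (f : R -> R) t d :
  0 < d -> (forall y, t <= y < t + d -> f y = f t) ->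
  filterlim f (at_right t) (locally (f t)).
Proof.
  intros Hd H. apply filterlim_ext_loc with (f := fun _ => f t).
  apply at_right_of with d; auto. intros y Hy. symmetry; apply H; lra.
  apply filterlim_const.
Qed.

Lemma rc_ext (f g : R -> R) t d :
  0 < d -> (forall y, t <= y < t + d -> f y = g y) ->
  filterlim f (at_right t) (locally (f t)) ->
  filterlim g (at_right t) (locally (g t)).
Proof.
  intros Hd H Hf. replace (g t) with (f t) by (apply H; lra).
  apply filterlim_ext_loc with (f := f); auto.
  apply at_right_of with d; auto. intros y Hy. apply H; lra.
Qed.

Lemma rsum_le n (f g : nat -> R) :
  (forall k, (k < n)%nat -> f k <= g k) -> rsum n f <= rsum n g.
Proof.
  induction n; simpl; intros H. lra.
  assert (f n <= g n) by (apply H; lia).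
  assert (rsum n f <= rsum n g) by (apply IHn; intros; apply H; lia). lra.
Qed.

Lemma rsum_lt n (f g : nat -> R) k0 :
  (forall k, (k < n)%nat -> f k <= g k) -> (k0 < n)%nat -> f k0 < g k0 ->
  rsum n f < rsum n g.
Proof.
  induction n; simpl; intros H Hk Hs. lia.
  destruct (Nat.eq_dec k0 n).
  - subst. assert (rsum n f <= rsum n g) by (apply rsum_le; intros; apply H; lia). lra.
  - assert (f n <= g n) by (apply H; lia).
    assert (rsum n f < rsum n g) by (apply IHn; auto; try lia; intros; apply H; lia). lra.
Qed.

Lemma rsum_diff n (f g : nat -> R) i j :
  i <> j -> (forall k, k <> i -> k <> j -> f k = g k) ->
  rsum n f - rsum n g =
   (if Compare_dec.lt_dec i n then f i - g i else 0) + (if Compare_dec.lt_dec j n then f j - g j else 0).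
Proof.
  intros Hij H. induction n; simpl. lra.
  rewrite <- (Rplus_0_r (rsum n f + f n - (rsum n g + g n))).
  destruct (Compare_dec.lt_dec i n); destruct (Compare_dec.lt_dec i (S n)); destruct (Compare_dec.lt_dec j n);
  destruct (Compare_dec.lt_dec j (S n)); try lia;
  try (assert (i = n) by lia); try (assert (j = n) by lia); subst; try lia;
  try (rewrite (H n) by lia); lra.
Qed.

Lemma rsum_two M (f : nat -> R) i j :
  i <> j -> (i < M)%nat -> (j < M)%nat -> (forall k, (k < M)%nat -> 0 <= f k) ->
  f i + f j <= rsum M f.
Proof.
  intros Hij Hi Hj Hf.
  pose (g := fun k => if Nat.eq_dec k i then 0 else if Nat.eq_dec k j then 0 else f k).
  assert (E := rsum_diff M g f i j Hij).
  assert (rsum M g >= 0).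
  { apply Rle_ge. replace 0 with (rsum M (fun _ => 0)).
    apply rsum_le. intros k Hk. unfold g. destruct (Nat.eq_dec k i); destruct (Nat.eq_dec k j); try lra; apply Hf; auto.
    clear. induction M; simpl; lra. }
  assert (E2 : forall k, k <> i -> k <> j -> g k = f k).
  { intros k Hi' Hj'. unfold g. destruct (Nat.eq_dec k i); destruct (Nat.eq_dec k j); try lia; auto. }
  specialize (E E2).
  destruct (Compare_dec.lt_dec i M); destruct (Compare_dec.lt_dec j M); try lia.
  assert (g i = 0) by (unfold g; destruct (Nat.eq_dec i i); lia || lra).
  assert (g j = 0) by (unfold g; destruct (Nat.eq_dec j i); [lra|]; destruct (Nat.eq_dec j j); lia || lra).
  lra.
Qed.


Definition patch (f : R -> R) (u h c : R) (t : R) : R :=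
  if Rle_dec u t then (if Rlt_dec t (u+h) then c else f t) else f t.

Lemma patch_rc f u h c : 0 < h ->
  (forall t, 0 < t -> filterlim f (at_right t) (locally (f t))) ->
  forall t, 0 < t -> filterlim (patch f u h c) (at_right t) (locally (patch f u h c t)).
Proof.
  intros Hh Hf t Ht.
  destruct (Rle_dec u t) as [H1|H1]; [destruct (Rlt_dec t (u+h)) as [H2|H2]|].
  - apply rc_ext with (f := fun _ => c) (d := u + h - t). lra.
    intros y Hy. unfold patch. destruct (Rle_dec u y); [|lra]. destruct (Rlt_dec y (u+h)); [auto|lra].
    apply filterlim_const.
  - apply rc_ext with (f := f) (d := 1). lra.
    intros y Hy. unfold patch. destruct (Rle_dec u y); [|lra]. destruct (Rlt_dec y (u+h)); [lra|auto].
    auto.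
  - apply rc_ext with (f := f) (d := u - t). lra.
    intros y Hy. unfold patch. destruct (Rle_dec u y); [lra|auto].
    auto.
Qed.

Lemma ex_sub (g : R -> R) a b c d : a <= c -> c <= d -> d <= b -> ex_RInt g a b -> ex_RInt g c d.
Proof.
  intros H1 H2 H3 H.
  assert (K : ex_RInt g a d) by (apply (ex_RInt_Chasles_1 g a d b); [lra|exact H]).
  apply (ex_RInt_Chasles_2 g a c d); [lra|exact K].
Qed.

Lemma patch_int (s f : R -> R) u h c T :
  0 <= u -> 0 < h -> u + h <= T -> ex_RInt (fun t => s (f t)) 0 T ->
  ex_RInt (fun t => s (patch f u h c t)) 0 T /\
  RInt (fun t => s (patch f u h c t)) 0 T =
   RInt (fun t => s (f t)) 0 T - RInt (fun t => s (f t)) u (u+h) + h * s c.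
Proof.
  intros Hu Hh HT Hex. set (F := fun t => s (f t)). set (G := fun t => s (patch f u h c t)).
  assert (E1 : ex_RInt F 0 u) by (apply ex_sub with 0 T; auto; lra).
  assert (E2 : ex_RInt F u (u+h)) by (apply ex_sub with 0 T; auto; lra).
  assert (E3 : ex_RInt F (u+h) T) by (apply ex_sub with 0 T; auto; lra).
  assert (Htot : RInt F 0 T = RInt F 0 u + RInt F u (u+h) + RInt F (u+h) T).
  { rewrite <- (RInt_Chasles F 0 u T); auto. rewrite <- (RInt_Chasles F u (u+h) T); auto.
    change plus with Rplus. simpl. lra. apply ex_RInt_Chasles with (u+h); auto. }
  assert (I1 : is_RInt G 0 u (RInt F 0 u)).
  { apply is_RInt_ext with F. rewrite Rmin_left, Rmax_right by lra. intros y Hy.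
    unfold F, G, patch. destruct (Rle_dec u y); [lra|auto]. exact (RInt_correct F _ _ E1). }
  assert (I2 : is_RInt G u (u+h) (h * s c)).
  { apply is_RInt_ext with (fun _ => s c). rewrite Rmin_left, Rmax_right by lra. intros y Hy.
    unfold G, patch. destruct (Rle_dec u y); [|lra]. destruct (Rlt_dec y (u+h)); [auto|lra].
    replace (h * s c) with (scal (u + h - u) (s c)). exact (is_RInt_const (V:=R_NormedModule) u (u+h) (s c)).
    change scal with Rmult. simpl. change mult with Rmult. simpl. ring_simplify. auto. }
  assert (I3 : is_RInt G (u+h) T (RInt F (u+h) T)).
  { apply is_RInt_ext with F. rewrite Rmin_left, Rmax_right by lra. intros y Hy.
    unfold F, G, patch. destruct (Rle_dec u y); [|lra]. destruct (Rlt_dec y (u+h)); [lra|auto].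
    exact (RInt_correct F _ _ E3). }
  assert (I := is_RInt_Chasles G 0 (u+h) T _ _ (is_RInt_Chasles G 0 u (u+h) _ _ I1 I2) I3).
  split. eexists; exact I. rewrite (is_RInt_unique _ _ _ _ I). rewrite Htot.
  change plus with Rplus. simpl. lra.
Qed.

Lemma RInt_ub (F : R -> R) a b K : a <= b -> ex_RInt F a b ->
  (forall t, a < t < b -> F t <= K) -> RInt F a b <= (b - a) * K.
Proof.
  intros Hab Hex H. replace ((b-a)*K) with (RInt (fun _ => K) a b).
  apply RInt_le; auto. apply ex_RInt_const.
  rewrite RInt_const. reflexivity.
Qed.


Lemma ivt_int (g : R -> R) T x : 0 <= T -> ex_RInt g 0 T -> 0 <= x <= RInt g 0 T ->
  exists T', 0 <= T' <= T /\ is_RInt g 0 T' x /\ (x < RInt g 0 T -> T' < T).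
Proof.
  intros HT Hex Hx.
  destruct (ex_RInt_ub g 0 T Hex) as [Mb HM]. rewrite Rmin_left, Rmax_right in HM by lra.
  assert (HMb : 0 <= Mb).
  { specialize (HM 0 ltac:(lra)). change norm with Rabs in HM. simpl in HM.
    pose proof (Rabs_pos (g 0)). lra. }
  assert (Lip : forall p q, 0 <= p -> p <= q -> q <= T ->
     Rabs (RInt g 0 q - RInt g 0 p) <= (q - p) * Mb).
  { intros p q H1 H2 H3.
    assert (Ep : ex_RInt g 0 p) by (apply ex_sub with 0 T; auto; lra).
    assert (Epq : ex_RInt g p q) by (apply ex_sub with 0 T; auto; lra).
    rewrite <- (RInt_Chasles g 0 p q Ep Epq). change plus with Rplus. simpl.
    replace (RInt g 0 p + RInt g p q - RInt g 0 p) with (RInt g p q) by (unfold Rminus; rewrite Rplus_comm, <- Rplus_assoc, Rplus_opp_l, Rplus_0_l; reflexivity).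
    apply (norm_RInt_le_const (V:=R_NormedModule) g p q (RInt g p q) Mb H2).
    intros y Hy. apply HM. lra. exact (RInt_correct g p q Epq). }
  set (cl := fun t => Rmax 0 (Rmin T t)).
  assert (Hcl : forall t, 0 <= cl t <= T).
  { intros t. unfold cl, Rmax, Rmin. destruct (Rle_dec T t); destruct (Rle_dec 0 _); lra. }
  assert (Hcl2 : forall a b, a <= b -> cl a <= cl b /\ cl b - cl a <= b - a).
  { intros a b Hab. unfold cl, Rmax, Rmin.
    destruct (Rle_dec T a); destruct (Rle_dec T b); destruct (Rle_dec 0 a); destruct (Rle_dec 0 b);
    destruct (Rle_dec 0 T); try lra. }
  set (G := fun t => RInt g 0 (cl t)).
  assert (LG : forall a b, Rabs (G b - G a) <= Mb * Rabs (b - a)).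
  { intros a b. destruct (Rle_dec a b).
    - destruct (Hcl2 a b r). pose proof (Hcl a). pose proof (Hcl b).
      pose proof (Lip (cl a) (cl b) ltac:(lra) ltac:(lra) ltac:(lra)). unfold G.
      rewrite (Rabs_right (b - a)) by lra. nra.
    - destruct (Hcl2 b a ltac:(lra)). pose proof (Hcl a). pose proof (Hcl b).
      pose proof (Lip (cl b) (cl a) ltac:(lra) ltac:(lra) ltac:(lra)). unfold G.
      rewrite (Rabs_left1 (b - a)) by lra. rewrite Rabs_minus_sym. nra. }
  assert (Hc : continuity G).
  { intros x0. unfold continuity_pt, continue_in, limit1_in, limit_in. intros eps Heps.
    exists (eps / (Mb + 1)). split. apply Rdiv_lt_0_compat; lra.
    intros y [_ Hy]. simpl in *. unfold R_dist in *.
    assert (Mb * (eps / (Mb + 1)) < eps).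
    { unfold Rdiv. rewrite <- Rmult_assoc. apply Rmult_lt_reg_r with (Mb + 1). lra.
      rewrite Rmult_assoc, Rinv_l by lra. nra. }
    pose proof (LG x0 y). pose proof (Rabs_pos (y - x0)). nra. }
  assert (G0 : G 0 = 0).
  { unfold G. replace (cl 0) with 0. rewrite RInt_point. reflexivity.
    unfold cl, Rmax, Rmin. destruct (Rle_dec T 0); destruct (Rle_dec 0 _); lra. }
  assert (GT : G T = RInt g 0 T).
  { unfold G. replace (cl T) with T. reflexivity.
    unfold cl, Rmax, Rmin. destruct (Rle_dec T T); destruct (Rle_dec 0 _); lra. }
  assert (Hr : Rmin (G 0) (G T) <= x <= Rmax (G 0) (G T)).
  { rewrite G0, GT, Rmin_left, Rmax_right by lra. lra. }
  destruct (IVT_gen G 0 T x Hc Hr) as [x0 [Hx0 Gx0]].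
  rewrite Rmin_left, Rmax_right in Hx0 by lra.
  assert (Ex : cl x0 = x0).
  { unfold cl, Rmax, Rmin. destruct (Rle_dec T x0); destruct (Rle_dec 0 _); lra. }
  exists x0. split; [lra|split].
  - rewrite <- Gx0. unfold G. rewrite Ex.
    assert (E0 : ex_RInt g 0 x0) by (apply ex_sub with 0 T; auto; lra).
    exact (RInt_correct g 0 x0 E0).
  - intros Hlt. destruct (Req_dec x0 T) as [He|]; [|lra]. rewrite He, GT in Gx0. lra.
Qed.


Lemma improve (M : nat) (B : R) (s : R -> R) (x w : nat -> R) (T : nat -> R)
  (th' : nat -> R -> R) (k0 : nat) :
  (forall k, (k < M)%nat -> 0 < x k) ->
  (forall k, (k < M)%nat -> 0 < w k) ->
  (forall k t, (k < M)%nat -> 0 < t -> 0 <= th' k t <= B) ->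
  (forall k t, (k < M)%nat -> 0 < t -> filterlim (th' k) (at_right t) (locally (th' k t))) ->
  (forall t, 0 < t -> rsum M (fun k => th' k t) <= B) ->
  (forall k, (k < M)%nat -> 0 <= T k /\ ex_RInt (fun t => s (th' k t)) 0 (T k) /\
       x k <= RInt (fun t => s (th' k t)) 0 (T k) /\ (forall t, T k < t -> th' k t = 0)) ->
  (k0 < M)%nat -> x k0 < RInt (fun t => s (th' k0 t)) 0 (T k0) ->
  exists th2 T2, feasible M B s x th2 T2 /\ cost M w T2 < cost M w T.
Proof.
  intros Hx Hw H1 H2 H3 H4 Hk0 H5.
  assert (HT : forall k, exists T', (k < M)%nat -> 0 <= T' <= T k /\
     is_RInt (fun t => s (th' k t)) 0 T' (x k) /\
     (x k < RInt (fun t => s (th' k t)) 0 (T k) -> T' < T k)).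
  { intros k. destruct (Compare_dec.lt_dec k M) as [Hk|Hk].
    - destruct (H4 k Hk) as [A [B' [C D]]]. pose proof (Hx k Hk).
      destruct (ivt_int _ (T k) (x k) A B' ltac:(lra)) as [T' HT']. exists T'. auto.
    - exists 0. intros; lia. }
  set (Tp := fun k => proj1_sig (constructive_indefinite_description _ (HT k))).
  assert (HTp : forall k, (k < M)%nat -> 0 <= Tp k <= T k /\
     is_RInt (fun t => s (th' k t)) 0 (Tp k) (x k) /\
     (x k < RInt (fun t => s (th' k t)) 0 (T k) -> Tp k < T k)).
  { intros k. unfold Tp. destruct (constructive_indefinite_description _ (HT k)). simpl. auto. }
  set (th2 := fun k t => if Rlt_dec t (Tp k) then th' k t else 0).
  exists th2, Tp. split.
  - split; [|split; [|split]].
    + intros k t Hk Ht. unfold th2. destruct (Rlt_dec t (Tp k)). apply H1; auto.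
      destruct (HTp k Hk). pose proof (H1 k t Hk Ht). lra.
    + intros k t Hk Ht. destruct (Rlt_dec t (Tp k)).
      * apply rc_ext with (f := th' k) (d := Tp k - t). lra.
        intros y Hy. unfold th2. destruct (Rlt_dec y (Tp k)); [auto|lra].
        apply H2; auto.
      * apply rc_of with 1. lra. intros y Hy. unfold th2.
        destruct (Rlt_dec y (Tp k)); destruct (Rlt_dec t (Tp k)); lra.
    + intros t Ht. eapply Rle_trans; [|apply (H3 t Ht)]. apply rsum_le.
      intros k Hk. unfold th2. destruct (Rlt_dec t (Tp k)). lra. apply H1; auto.
    + intros k Hk. destruct (HTp k Hk) as [A [C D]]. split; [lra|split].
      * apply is_RInt_ext with (fun t => s (th' k t)); auto.
        rewrite Rmin_left, Rmax_right by lra. intros y Hy. unfold th2.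
        destruct (Rlt_dec y (Tp k)); [auto|lra].
      * intros t Ht. unfold th2. destruct (Rlt_dec t (Tp k)); lra.
  - unfold cost. apply rsum_lt with k0; auto.
    + intros k Hk. destruct (HTp k Hk) as [A _]. pose proof (Hw k Hk). nra.
    + destruct (HTp k0 Hk0) as [_ [_ D]]. pose proof (Hw k0 Hk0). specialize (D H5). nra.
Qed.


Definition Small (P : R -> Prop) := exists d, 0 < d /\ forall y, 0 < y <= d -> P y.

Lemma small_and P Q : Small P -> Small Q -> Small (fun y => P y /\ Q y).
Proof.
  intros [d1 [H1 P1]] [d2 [H2 P2]]. exists (Rmin d1 d2). split.
  apply Rmin_glb_lt; auto. intros y Hy. pose proof (Rmin_l d1 d2). pose proof (Rmin_r d1 d2).
  split; [apply P1|apply P2]; lra.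
Qed.

Lemma small_ex P : Small P -> exists y, 0 < y /\ P y.
Proof. intros [d [H1 H2]]. exists d. split; auto. apply H2; lra. Qed.

Lemma small_le c : 0 < c -> Small (fun y => y <= c).
Proof. intros H. exists c. split; auto. intros; lra. Qed.

Lemma small_scale P l : 0 < l -> Small P -> Small (fun y => P (l * y)).
Proof.
  intros Hl [d [Hd H]]. exists (d / l). split. apply Rdiv_lt_0_compat; auto.
  intros y Hy. apply H. split. nra. destruct Hy as [_ Hy].
  apply Rmult_le_compat_l with (r := l) in Hy; [|lra].
  replace (l * (d / l)) with d in Hy by (field; lra). lra.
Qed.

Lemma small_imp (P Q : R -> Prop) : (forall y, 0 < y -> P y -> Q y) -> Small P -> Small Q.
Proof. intros H [d [Hd HP]]. exists d. split; auto. intros y Hy. apply H. lra. apply HP; auto. Qed.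

Definition DerivHyp (B : R) (s ds : R -> R) := forall a, 0 <= a <= B ->
      filterlim (fun y => (s y - s a) / (y - a))
        (within (fun y => 0 <= y <= B /\ y <> a) (locally a)) (locally (ds a)).

Lemma deriv_approx (B : R) (s ds : R -> R) (Sder : DerivHyp B s ds) a : 0 <= a <= B -> forall g, 0 < g -> exists d, 0 < d /\
  forall y, 0 <= y <= B -> y <> a -> Rabs (y - a) < d ->
    Rabs ((s y - s a) / (y - a) - ds a) < g.
Proof.
  intros Ha g Hg.
  destruct (proj1 (filterlim_locally _ _) (Sder a Ha) (mkposreal g Hg)) as [e He].
  exists e. split. apply cond_pos. intros y Hy Hne Hd.
  apply (He y). apply ball_R. exact Hd. split; auto.
Qed.

Lemma right_approx (B : R) (s ds : R -> R) (Sder : DerivHyp B s ds) a g : 0 <= a < B -> 0 < g ->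
  Small (fun e => a + e <= B /\ e * (ds a - g) <= s (a + e) - s a).
Proof.
  intros Ha Hg. destruct (deriv_approx B s ds Sder a ltac:(lra) g Hg) as [d [Hd H]].
  exists (Rmin (d/2) (B - a)). split. apply Rmin_glb_lt; lra.
  intros e He. pose proof (Rmin_l (d/2) (B-a)). pose proof (Rmin_r (d/2) (B-a)).
  split. lra.
  specialize (H (a + e) ltac:(lra) ltac:(lra)).
  replace (a + e - a) with e in H by ring. rewrite Rabs_right in H by lra.
  specialize (H ltac:(lra)). apply Rabs_lt_between' in H.
  assert (E : s (a + e) - s a = e * ((s (a + e) - s a) / e)) by (field; lra).
  rewrite E. apply Rmult_le_compat_l; lra.
Qed.

Lemma left_approx (B : R) (s ds : R -> R) (Sder : DerivHyp B s ds) a g : 0 < a <= B -> 0 < g ->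
  Small (fun e => a / 2 <= a - e /\ s a - s (a - e) <= e * (ds a + g)).
Proof.
  intros Ha Hg. destruct (deriv_approx B s ds Sder a ltac:(lra) g Hg) as [d [Hd H]].
  exists (Rmin (d/2) (a/2)). split. apply Rmin_glb_lt; lra.
  intros e He. pose proof (Rmin_l (d/2) (a/2)). pose proof (Rmin_r (d/2) (a/2)).
  split. lra.
  specialize (H (a - e) ltac:(lra) ltac:(lra)).
  replace (a - e - a) with (- e) in H by ring. rewrite Rabs_left in H by lra.
  specialize (H ltac:(lra)). apply Rabs_lt_between' in H.
  assert (E : s a - s (a - e) = e * ((s (a - e) - s a) / (- e))) by (field; lra).
  rewrite E. apply Rmult_le_compat_l; lra.
Qed.

Lemma cont_small (B : R) (s ds : R -> R) (Sder : DerivHyp B s ds) c g : 0 <= c <= B -> 0 < g ->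
  Small (fun d => forall y, 0 <= y <= B -> Rabs (y - c) <= 4 * d -> Rabs (s y - s c) < g).
Proof.
  intros Hc Hg. destruct (deriv_approx B s ds Sder c Hc 1 ltac:(lra)) as [d [Hd H]].
  set (K := Rabs (ds c) + 1).
  assert (HK : 0 < K) by (unfold K; pose proof (Rabs_pos (ds c)); lra).
  exists (Rmin (d/8) (g / (8 * K))). split. apply Rmin_glb_lt. lra.
  apply Rdiv_lt_0_compat; lra.
  intros e He y Hy Hd2. pose proof (Rmin_l (d/8) (g / (8 * K))). pose proof (Rmin_r (d/8) (g/(8*K))).
  destruct (Req_dec y c) as [->|Hne]. rewrite Rminus_diag, Rabs_R0. lra.
  specialize (H y Hy Hne ltac:(lra)).
  assert (Hq : Rabs ((s y - s c) / (y - c)) <= K).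
  { unfold K. replace ((s y - s c) / (y - c)) with (((s y - s c) / (y - c) - ds c) + ds c) by ring.
    eapply Rle_trans. apply Rabs_triang. lra. }
  assert (E : s y - s c = ((s y - s c) / (y - c)) * (y - c)) by (field; lra).
  rewrite E, Rabs_mult.
  assert (Rabs (y - c) <= 4 * (g / (8 * K))) by lra.
  assert (4 * (g / (8 * K)) * K = g / 2) by (field; lra).
  pose proof (Rabs_pos (y - c)). pose proof (Rabs_pos ((s y - s c) / (y - c))). nra.
Qed.




Lemma choose_params (B : R) (s ds : R -> R)
  (Sder : forall a, 0 <= a <= B ->
      filterlim (fun y => (s y - s a) / (y - a))
        (within (fun y => 0 <= y <= B /\ y <> a) (locally a)) (locally (ds a)))
  a b a2 b2 :
  0 < a < B -> 0 < b < B -> 0 < a2 < B -> 0 < b2 < B ->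
  0 < ds a -> 0 < ds b -> 0 < ds a2 -> 0 < ds b2 ->
  ds a2 * ds b < ds a * ds b2 ->
  exists e n d, 0 < e /\ 0 < n /\ 0 < d /\ 0 <= b - 3 * d - e /\ 0 <= a2 - 3 * d - n /\
    a + d + e <= B /\ b2 + d + n <= B /\ b + d <= B /\ a2 + d <= B /\
    0 < s (a + d + e) - s (a + d) + s (a2 - 3 * d - n) - s (a2 + d) /\
    0 < s (b2 + d + n) - s (b2 + d) + s (b - 3 * d - e) - s (b + d).
Proof.
  intros Ha Hb Ha2 Hb2 HA HB HA2 HB2 Hr.
  set (A := ds a) in *. set (Bb := ds b) in *. set (A2 := ds a2) in *. set (B2 := ds b2) in *.
  assert (Hq : Bb / B2 < A / A2).
  { assert (A / A2 - Bb / B2 = (A * B2 - A2 * Bb) / (A2 * B2)) by (field; lra).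
    assert (0 < (A * B2 - A2 * Bb) / (A2 * B2)) by (apply Rdiv_lt_0_compat; nra). lra. }
  set (l := (Bb / B2 + A / A2) / 2).
  assert (Hl1 : l * A2 < A).
  { assert (l < A / A2) by (unfold l; lra).
    apply Rmult_lt_compat_r with (r := A2) in H; [|lra].
    replace (A / A2 * A2) with A in H by (field; lra). lra. }
  assert (Hl2 : Bb < l * B2).
  { assert (Bb / B2 < l) by (unfold l; lra).
    apply Rmult_lt_compat_r with (r := B2) in H; [|lra].
    replace (Bb / B2 * B2) with Bb in H by (field; lra). lra. }
  assert (Hl : 0 < l).
  { unfold l. assert (0 < Bb / B2) by (apply Rdiv_lt_0_compat; lra).
    assert (0 < A / A2) by (apply Rdiv_lt_0_compat; lra). lra. }
  set (gap := Rmin (A - l * A2) (l * B2 - Bb)).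
  assert (Hgap : 0 < gap) by (apply Rmin_glb_lt; lra).
  assert (Hg1 : gap <= A - l * A2) by apply Rmin_l.
  assert (Hg2 : gap <= l * B2 - Bb) by apply Rmin_r.
  set (g := gap / (2 * (1 + l))).
  assert (Hg : 0 < g) by (apply Rdiv_lt_0_compat; lra).
  assert (Hgl : g * (1 + l) = gap / 2) by (unfold g; field; lra).
  destruct (small_ex _
    (small_and _ _ (right_approx B s ds Sder a g ltac:(lra) Hg)
    (small_and _ _ (left_approx B s ds Sder b g ltac:(lra) Hg)
    (small_and _ _ (small_scale _ l Hl (left_approx B s ds Sder a2 g ltac:(lra) Hg))
    (small_and _ _ (small_scale _ l Hl (right_approx B s ds Sder b2 g ltac:(lra) Hg))
    (small_and _ _ (small_le ((B - a)/2) ltac:(lra))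
      (small_scale _ l Hl (small_le ((B - b2)/2) ltac:(lra)))))))))
    as [e [He [[R1 R2] [[L1 L2] [[L3 L4] [[R3 R4] [S1 S2]]]]]]].
  set (n := l * e) in *.
  assert (Hn : 0 < n) by (unfold n; apply Rmult_lt_0_compat; lra).
  set (Gi := s (a + e) - s a + s (a2 - n) - s a2).
  set (Gj := s (b2 + n) - s b2 + s (b - e) - s b).
  assert (HGi : 0 < Gi).
  { assert (e * (A - g) - n * (A2 + g) = e * ((A - l * A2) - g * (1 + l))) by (unfold n; ring).
    assert (0 < e * ((A - l * A2) - g * (1 + l))) by (apply Rmult_lt_0_compat; lra).
    unfold A, A2 in H, H0. unfold Gi. lra. }
  assert (HGj : 0 < Gj).
  { assert (n * (B2 - g) - e * (Bb + g) = e * ((l * B2 - Bb) - g * (1 + l))) by (unfold n; ring).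
    assert (0 < e * ((l * B2 - Bb) - g * (1 + l))) by (apply Rmult_lt_0_compat; lra).
    unfold Bb, B2 in H, H0. unfold Gj. lra. }
  set (G := Rmin Gi Gj).
  assert (HG : 0 < G) by (apply Rmin_glb_lt; lra).
  assert (HG1 : G <= Gi) by apply Rmin_l.
  assert (HG2 : G <= Gj) by apply Rmin_r.
  assert (HG4 : 0 < G / 4) by lra.
  destruct (small_ex _ (small_and _ _ (cont_small B s ds Sder (a + e) _ ltac:(lra) HG4)
    (small_and _ _ (cont_small B s ds Sder a _ ltac:(lra) HG4)
    (small_and _ _ (cont_small B s ds Sder (a2 - n) _ ltac:(lra) HG4)
    (small_and _ _ (cont_small B s ds Sder a2 _ ltac:(lra) HG4)
    (small_and _ _ (cont_small B s ds Sder (b2 + n) _ ltac:(lra) HG4)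
    (small_and _ _ (cont_small B s ds Sder b2 _ ltac:(lra) HG4)
    (small_and _ _ (cont_small B s ds Sder (b - e) _ ltac:(lra) HG4)
    (small_and _ _ (cont_small B s ds Sder b _ ltac:(lra) HG4)
    (small_and _ _ (small_le ((B - a - e)/4) ltac:(lra))
    (small_and _ _ (small_le ((b - e)/4) ltac:(lra))
    (small_and _ _ (small_le ((a2 - n)/4) ltac:(lra))
    (small_and _ _ (small_le ((B - b2 - n)/4) ltac:(lra))
    (small_and _ _ (small_le ((B - b)/4) ltac:(lra))
    (small_le ((B - a2)/4) ltac:(lra))))))))))))))))
    as [d [Hd [C1 [C2 [C3 [C4 [C5 [C6 [C7 [C8 [D1 [D2 [D3 [D4 [D5 D6]]]]]]]]]]]]]]].
  exists e, n, d. do 9 (split; [lra|]).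
  specialize (C1 (a + d + e) ltac:(lra) ltac:(apply Rabs_le; lra)).
  specialize (C2 (a + d) ltac:(lra) ltac:(apply Rabs_le; lra)).
  specialize (C3 (a2 - 3 * d - n) ltac:(lra) ltac:(apply Rabs_le; lra)).
  specialize (C4 (a2 + d) ltac:(lra) ltac:(apply Rabs_le; lra)).
  specialize (C5 (b2 + d + n) ltac:(lra) ltac:(apply Rabs_le; lra)).
  specialize (C6 (b2 + d) ltac:(lra) ltac:(apply Rabs_le; lra)).
  specialize (C7 (b - 3 * d - e) ltac:(lra) ltac:(apply Rabs_le; lra)).
  specialize (C8 (b + d) ltac:(lra) ltac:(apply Rabs_le; lra)).
  apply Rabs_lt_between' in C1, C2, C3, C4, C5, C6, C7, C8.
  unfold Gi, Gj in *. split; lra.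
Qed.


Lemma service2 (B : R) (s f : R -> R) T t1 t2 h c1 c2 p1 p2 :
  (forall p q, 0 <= p -> p <= q -> q <= B -> s p <= s q) ->
  0 < t1 -> 0 < t2 -> 0 < h -> t1 + h <= T -> t2 + h <= T ->
  (t1 + h < t2 \/ t2 + h < t1) ->
  ex_RInt (fun t => s (f t)) 0 T ->
  (forall t, t1 < t < t1 + h -> 0 <= f t <= p1) -> p1 <= B ->
  (forall t, t2 < t < t2 + h -> 0 <= f t <= p2) -> p2 <= B ->
  ex_RInt (fun t => s (patch (patch f t1 h c1) t2 h c2 t)) 0 T /\
  RInt (fun t => s (f t)) 0 T + h * (s c1 - s p1 + s c2 - s p2) <=
  RInt (fun t => s (patch (patch f t1 h c1) t2 h c2 t)) 0 T.
Proof.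
  intros Smono Ht1 Ht2 Hh HT1 HT2 Hdis Hex Hp1 HB1 Hp2 HB2.
  destruct (patch_int s f t1 h c1 T ltac:(lra) Hh HT1 Hex) as [Ex1 R1].
  destruct (patch_int s (patch f t1 h c1) t2 h c2 T ltac:(lra) Hh HT2 Ex1) as [Ex2 R2].
  split; auto. rewrite R2, R1.
  assert (U1 : RInt (fun t => s (f t)) t1 (t1 + h) <= (t1 + h - t1) * s p1).
  { apply RInt_ub. lra. apply ex_sub with 0 T; auto; lra.
    intros t Ht. destruct (Hp1 t Ht). apply Smono; lra. }
  assert (U2 : RInt (fun t => s (patch f t1 h c1 t)) t2 (t2 + h) <= (t2 + h - t2) * s p2).
  { apply RInt_ub. lra. apply ex_sub with 0 T; auto; lra.
    intros t Ht. unfold patch. destruct (Rle_dec t1 t); [destruct (Rlt_dec t (t1 + h))|].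
    - lra.
    - destruct (Hp2 t Ht). apply Smono; lra.
    - destruct (Hp2 t Ht). apply Smono; lra. }
  replace (t1 + h - t1) with h in U1 by ring. replace (t2 + h - t2) with h in U2 by ring.
  lra.
Qed.

Lemma pos_before (f : R -> R) T t :
  0 < f t -> filterlim f (at_right t) (locally (f t)) ->
  (forall y, T < y -> f y = 0) -> t < T.
Proof.
  intros Hp Hrc Hz. destruct (Rlt_le_dec t T) as [|Hle]; auto. exfalso.
  destruct (rc_close f t (f t) Hrc (f t / 2) ltac:(lra)) as [d [Hd H]].
  specialize (H (t + d / 2) ltac:(lra)). rewrite Hz in H by lra.
  rewrite Rabs_left in H; lra.
Qed.


Lemma rc_close2 (f : R -> R) t : filterlim f (at_right t) (locally (f t)) ->
  forall g, 0 < g -> exists d, 0 < d /\ forall y, t <= y < t + d -> Rabs (f y - f t) < g.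
Proof.
  intros H g Hg. destruct (rc_close f t (f t) H g Hg) as [d [Hd Hy]]. exists d. split; auto.
  intros y Hy'. destruct (Req_dec y t) as [->|]. rewrite Rminus_diag, Rabs_R0; lra.
  apply Hy; lra.
Qed.

Ltac dpatch := unfold patch;
  repeat match goal with
  | |- context [Rle_dec ?x ?y] => destruct (Rle_dec x y)
  | |- context [Rlt_dec ?x ?y] => destruct (Rlt_dec x y) end.

Lemma core (M : nat) (B : R) (s ds : R -> R) (x w : nat -> R)
    (hs : speedup_ok B s ds)
    (hx : forall i, (i < M)%nat -> 0 < x i)
    (hw : forall i, (i < M)%nat -> 0 < w i)
    (th : nat -> R -> R) (T : nat -> R)
    (hopt : optimal M B s x w th T) i j t1 t2 :
  i <> j -> (i < M)%nat -> (j < M)%nat -> 0 < t1 -> 0 < t2 ->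
  0 < th i t1 -> 0 < th j t1 -> 0 < th i t2 -> 0 < th j t2 ->
  ds (th i t2) * ds (th j t1) < ds (th i t1) * ds (th j t2) -> False.
Proof.
  intros Hij Hi Hj Ht1 Ht2 Pa Pb Pa2 Pb2 Hr.
  destruct hs as [S0 [Sinc [_ [Sder [_ Spos]]]]].
  destruct hopt as [[F1 [F2 [F3 F4]]] Hopt].
  assert (Smono : forall p q, 0 <= p -> p <= q -> q <= B -> s p <= s q).
  { intros p q H1 H2 H3. destruct (Req_dec p q) as [->|]. lra. left; apply Sinc; lra. }
  assert (Ht12 : t1 <> t2). { intros E. rewrite E in Hr. lra. }
  set (a := th i t1) in *. set (b := th j t1) in *. set (a2 := th i t2) in *. set (b2 := th j t2) in *.
  assert (Hab : a + b <= B).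
  { eapply Rle_trans; [|apply (F3 t1 Ht1)]. apply (rsum_two M (fun k => th k t1) i j Hij Hi Hj).
    intros k Hk. apply (F1 k t1 Hk Ht1). }
  assert (Hab2 : a2 + b2 <= B).
  { eapply Rle_trans; [|apply (F3 t2 Ht2)]. apply (rsum_two M (fun k => th k t2) i j Hij Hi Hj).
    intros k Hk. apply (F1 k t2 Hk Ht2). }
  destruct (F4 i Hi) as [HTi [HIi HZi]]. destruct (F4 j Hj) as [HTj [HIj HZj]].
  assert (C1 : t1 < T i) by (apply (pos_before (th i)); auto).
  assert (C2 : t1 < T j) by (apply (pos_before (th j)); auto).
  assert (C3 : t2 < T i) by (apply (pos_before (th i)); auto).
  assert (C4 : t2 < T j) by (apply (pos_before (th j)); auto).
  destruct (choose_params B s ds Sder a b a2 b2 ltac:(lra) ltac:(lra) ltac:(lra) ltac:(lra)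
    (Spos a ltac:(lra)) (Spos b ltac:(lra)) (Spos a2 ltac:(lra)) (Spos b2 ltac:(lra)) Hr)
    as [e [n [d [He [Hn [Hd [K1 [K2 [K3 [K4 [K5 [K6 [Gi Gj]]]]]]]]]]]]].
  destruct (rc_close2 (th i) t1 (F2 i t1 Hi Ht1) d Hd) as [h1 [Hh1 N1]].
  destruct (rc_close2 (th j) t1 (F2 j t1 Hj Ht1) d Hd) as [h2 [Hh2 N2]].
  destruct (rc_close2 (th i) t2 (F2 i t2 Hi Ht2) d Hd) as [h3 [Hh3 N3]].
  destruct (rc_close2 (th j) t2 (F2 j t2 Hj Ht2) d Hd) as [h4 [Hh4 N4]].
  fold a b a2 b2 in N1, N2, N3, N4.
  assert (Hgap : 0 < Rabs (t1 - t2) / 2).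
  { assert (0 < Rabs (t1 - t2)) by (apply Rabs_pos_lt; lra). lra. }
  destruct (small_ex _ (small_and _ _ (small_le (h1/2) ltac:(lra))
     (small_and _ _ (small_le (h2/2) ltac:(lra))
     (small_and _ _ (small_le (h3/2) ltac:(lra))
     (small_and _ _ (small_le (h4/2) ltac:(lra))
     (small_and _ _ (small_le (Rabs (t1 - t2) / 2) Hgap)
     (small_and _ _ (small_le (T i - t1) ltac:(lra))
     (small_and _ _ (small_le (T j - t1) ltac:(lra))
     (small_and _ _ (small_le (T i - t2) ltac:(lra))
       (small_le (T j - t2) ltac:(lra)))))))))))
    as [h [Hh [L1 [L2 [L3 [L4 [L5 [L6 [L7 [L8 L9]]]]]]]]]].
  assert (Hdis : t1 + h < t2 \/ t2 + h < t1).
  { destruct (Rlt_le_dec t1 t2).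
    - rewrite Rabs_left in L5 by lra. left; lra.
    - rewrite Rabs_right in L5 by lra. right. lra. }
  set (Pi := patch (patch (th i) t1 h (a + d + e)) t2 h (a2 - 3 * d - n)).
  set (Pj := patch (patch (th j) t1 h (b - 3 * d - e)) t2 h (b2 + d + n)).
  set (th' := fun k => if Nat.eq_dec k i then Pi else if Nat.eq_dec k j then Pj else th k).
  destruct (service2 B s (th i) (T i) t1 t2 h (a + d + e) (a2 - 3 * d - n) (a + d) (a2 + d)
     Smono Ht1 Ht2 Hh ltac:(lra) ltac:(lra) Hdis (ex_intro _ _ HIi)) as [SIe SIv].
  { intros t Ht. pose proof (N1 t ltac:(lra)). pose proof (F1 i t Hi ltac:(lra)).
    apply Rabs_lt_between' in H. lra. }
  { lra. }
  { intros t Ht. pose proof (N3 t ltac:(lra)). pose proof (F1 i t Hi ltac:(lra)).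
    apply Rabs_lt_between' in H. lra. }
  { lra. }
  destruct (service2 B s (th j) (T j) t1 t2 h (b - 3 * d - e) (b2 + d + n) (b + d) (b2 + d)
     Smono Ht1 Ht2 Hh ltac:(lra) ltac:(lra) Hdis (ex_intro _ _ HIj)) as [SJe SJv].
  { intros t Ht. pose proof (N2 t ltac:(lra)). pose proof (F1 j t Hj ltac:(lra)).
    apply Rabs_lt_between' in H. lra. }
  { lra. }
  { intros t Ht. pose proof (N4 t ltac:(lra)). pose proof (F1 j t Hj ltac:(lra)).
    apply Rabs_lt_between' in H. lra. }
  { lra. }
  rewrite (is_RInt_unique _ _ _ _ HIi) in SIv. rewrite (is_RInt_unique _ _ _ _ HIj) in SJv.
  assert (Hsi : x i < RInt (fun t => s (th' i t)) 0 (T i)).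
  { unfold th'; cbv beta. destruct (Nat.eq_dec i i); [|congruence]. unfold Pi.
    assert (0 < h * (s (a + d + e) - s (a + d) + s (a2 - 3 * d - n) - s (a2 + d)))
      by (apply Rmult_lt_0_compat; lra). lra. }
  assert (Hsj : x j < RInt (fun t => s (th' j t)) 0 (T j)).
  { unfold th'; cbv beta. destruct (Nat.eq_dec j i); [lia|]. destruct (Nat.eq_dec j j); [|lia]. unfold Pj.
    assert (0 < h * (s (b - 3 * d - e) - s (b + d) + s (b2 + d + n) - s (b2 + d)))
      by (apply Rmult_lt_0_compat; lra). lra. }
  destruct (improve M B s x w T th' i hx hw) as [th2 [T2 [Hf Hc]]].
  - intros k t Hk Ht. unfold th'; cbv beta. destruct (Nat.eq_dec k i); [|destruct (Nat.eq_dec k j)].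
    + subst k. unfold Pi. dpatch; try lra; apply F1; auto.
    + subst k. unfold Pj. dpatch; try lra; apply F1; auto.
    + apply F1; auto.
  - intros k t Hk Ht. unfold th'; cbv beta. destruct (Nat.eq_dec k i); [|destruct (Nat.eq_dec k j)].
    + unfold Pi. apply patch_rc; [exact Hh| |exact Ht]. apply patch_rc; [exact Hh|]. intros; apply F2; auto.
    + unfold Pj. apply patch_rc; [exact Hh| |exact Ht]. apply patch_rc; [exact Hh|]. intros; apply F2; auto.
    + apply F2; auto.
  - intros t Ht. eapply Rle_trans; [|apply (F3 t Ht)].
    assert (E := rsum_diff M (fun k => th' k t) (fun k => th k t) i j Hij).
    assert (E2 : forall k, k <> i -> k <> j -> th' k t = th k t).
    { intros k H1 H2. unfold th'; cbv beta. destruct (Nat.eq_dec k i); [lia|]. destruct (Nat.eq_dec k j); [lia|]. auto. }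
    specialize (E E2). destruct (Compare_dec.lt_dec i M); [|lia]. destruct (Compare_dec.lt_dec j M); [|lia].
    assert (Hsum : th' i t + th' j t <= th i t + th j t).
    { unfold th'; cbv beta. destruct (Nat.eq_dec i i); [|lia]. destruct (Nat.eq_dec j i); [lia|].
      destruct (Nat.eq_dec j j); [|lia]. unfold Pi, Pj. dpatch; try lra.
      all: first [ (pose proof (N3 t ltac:(lra)) as Q1; pose proof (N4 t ltac:(lra)) as Q2;
                    apply Rabs_lt_between' in Q1, Q2; lra)
                 | (pose proof (N1 t ltac:(lra)) as Q1; pose proof (N2 t ltac:(lra)) as Q2;
                    apply Rabs_lt_between' in Q1, Q2; lra) ]. }
    simpl in E. lra.
  - intros k Hk. unfold th'; cbv beta. destruct (Nat.eq_dec k i); [|destruct (Nat.eq_dec k j)].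
    + subst k. split; [lra|split; [exact SIe|split]].
      * unfold th' in Hsi; cbv beta in Hsi. destruct (Nat.eq_dec i i); [|lia]. lra.
      * intros t Ht. unfold Pi. dpatch; try lra. apply HZi; lra.
    + subst k. split; [lra|split; [exact SJe|split]].
      * unfold th' in Hsj; cbv beta in Hsj. destruct (Nat.eq_dec j i); [lia|]. destruct (Nat.eq_dec j j); [|lia]. lra.
      * intros t Ht. unfold Pj. dpatch; try lra. apply HZj; lra.
    + destruct (F4 k Hk) as [A1 [A2 A3]]. split; [lra|split; [exists (x k); exact A2|split]].
      * rewrite (is_RInt_unique _ _ _ _ A2). lra.
      * exact A3.
  - exact Hi.
  - exact Hsi.
  - specialize (Hopt th2 T2 Hf). lra.
Qed.


Theorem theorem1 (M : nat) (B : R) (s ds : R -> R) (x w : nat -> R)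
    (hB : 0 < B) (hs : speedup_ok B s ds)
    (hx : forall i, (i < M)%nat -> 0 < x i)
    (hxdec : forall i j, (i <= j)%nat -> (j < M)%nat -> x j <= x i)
    (hw : forall i, (i < M)%nat -> 0 < w i)
    (hwinc : forall i j, (i <= j)%nat -> (j < M)%nat -> w i <= w j)
    (th : nat -> R -> R) (T : nat -> R)
    (hopt : optimal M B s x w th T) :
  forall i j, (i < M)%nat -> (j < M)%nat ->
    exists c : R, forall t, 0 < t -> 0 < th i t -> 0 < th j t ->
      ds (th i t) / ds (th j t) = c.
Proof.
  intros i j Hi Hj.
  assert (Spos : forall a, 0 <= a <= B -> 0 < ds a) by apply hs.
  assert (F1 : forall k t, (k < M)%nat -> 0 < t -> 0 <= th k t <= B) by apply hopt.
  destruct (classic (exists t0, 0 < t0 /\ 0 < th i t0 /\ 0 < th j t0)) as [[t0 [H0 [Hi0 Hj0]]]|Hn].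
  - exists (ds (th i t0) / ds (th j t0)). intros t Ht Hit Hjt.
    pose proof (F1 i t Hi Ht). pose proof (F1 j t Hj Ht).
    pose proof (F1 i t0 Hi H0). pose proof (F1 j t0 Hj H0).
    assert (P1 := Spos (th i t) ltac:(lra)). assert (P2 := Spos (th j t) ltac:(lra)).
    assert (P3 := Spos (th i t0) ltac:(lra)). assert (P4 := Spos (th j t0) ltac:(lra)).
    destruct (Nat.eq_dec i j) as [<-|Hij].
    + unfold Rdiv. rewrite !Rinv_r by lra. reflexivity.
    + destruct (Rtotal_order (ds (th i t) * ds (th j t0)) (ds (th i t0) * ds (th j t)))
        as [Hlt|[Heq|Hgt]].
      * exfalso. exact (core M B s ds x w hs hx hw th T hopt i j t0 t Hij Hi Hj H0 Ht Hi0 Hj0 Hit Hjt Hlt).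
      * assert (E : ds (th i t) = ds (th i t0) * ds (th j t) / ds (th j t0)).
        { rewrite <- Heq. field. lra. }
        rewrite E. field. lra.
      * exfalso. exact (core M B s ds x w hs hx hw th T hopt i j t t0 Hij Hi Hj Ht H0 Hit Hjt Hi0 Hj0 Hgt).
  - exists 0. intros t Ht Hit Hjt. exfalso. apply Hn. exists t. auto.
Qed.
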